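(* Let $m\geq 3$ and $n\geq 2$ be integers with $m\leq n$, let $K_m$ and $K_n$ be the complete graphs of orders $m$ and $n$. Then $rvcl(K_m\diamond K_n)=n+1$ if $n\geq |E(K_m)|-1$, and $rvcl(K_m\diamond K_n)=n+2$ if $n<|E(K_m)|-1$, where $|E(K_m)|=m(m-1)/2$.
   Context: All graphs are finite, simple, connected and undirected; $d$ denotes graph distance. A rainbow vertex $k$-coloring of $G$ is a map $c:V(G)\to\{1,\dots,k\}$ such that every two vertices are joined by a path whose internal vertices all receive distinct colors. For such $c$ let $R_i=c^{-1}(i)$; the rainbow code of $v$ is $(d(v,R_1),\dots,d(v,R_k))$ with $d(v,R_i)=\min_{x\in R_i}d(v,x)$. A locating rainbow $k$-coloring is a rainbow vertex $k$-coloring in which distinct vertices have distinct rainbow codes; $rvcl(G)$ is the least $k$ for which one exists. For graphs $G_m$ (order $m$) and $H_n$ (order $n$) on disjoint vertex sets, the edge corona $G_m\diamond H_n$ is obtained from one copy of $G_m$ and $|E(G_m)|$ vertex-disjoint copies of $H_n$, one per edge of $G_m$, by joining both end vertices of the $j$-th edge of $G_m$ to every vertex of the $j$-th copy of $H_n$. *)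

(* Defs.v *)
From mathcomp Require Import all_boot.
Set Implicit Arguments. Unset Strict Implicit. Unset Printing Implicit Defensive.

Section Graphs.
Variable T : finType.
Variable e : rel T.

(* walk x0 = u, x1, ..., xk = v of length k = size p, p = [x1;...;xk] *)
Definition walk_of_len (u v : T) (k : nat) : bool :=
  [exists p : k.-tuple T, path e u p && (last u p == v)].

(* graph distance: least length of a u-v walk (for connected graphs
   such a walk of length < #|T| always exists) *)
Definition dist (u v : T) : nat :=
  find (fun k => walk_of_len u v k) (iota 0 #|T|).

(* d(v, S) = min_{x in S} d(v, x); None encodes +infinity (S empty) *)
Definition dist_set (v : T) (S : {set T}) : option nat :=
  if [pick x in S] is Some _ then
    Some (\big[minn/#|T|]_(x in S) dist v x)
  else None.

Definition rainbow_vertex_coloring (k : nat) (c : T -> 'I_k) : Prop :=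
  forall u v : T, u != v ->
    exists p : seq T,
      [&& path e u p, last u p == v, uniq (u :: p)
        & uniq (map c (behead (belast u p)))].

Definition color_class (k : nat) (c : T -> 'I_k) (i : 'I_k) : {set T} :=
  [set x | c x == i].

Definition rainbow_code (k : nat) (c : T -> 'I_k) (v : T)
  : {ffun 'I_k -> option nat} :=
  [ffun i => dist_set v (color_class c i)].

Definition locating_rainbow_coloring (k : nat) (c : T -> 'I_k) : Prop :=
  rainbow_vertex_coloring c /\ injective (rainbow_code c).

Definition rvcl_eq (k : nat) : Prop :=
  (exists c : T -> 'I_k, locating_rainbow_coloring c) /\
  (forall k', k' < k -> ~ exists c : T -> 'I_k', locating_rainbow_coloring c).

End Graphs.

Definition KEdge (m : nat) := {p : 'I_m * 'I_m | p.1 < p.2}.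

Definition corona_vertex (m n : nat) : finType :=
  ('I_m + (KEdge m * 'I_n))%type.

Definition corona_adj (m n : nat) : rel (corona_vertex m n) :=
  fun x y =>
    match x, y with
    | inl a, inl b => a != b
    | inl a, inr (ed, _) => (a == (val ed).1) || (a == (val ed).2)
    | inr (ed, _), inl a => (a == (val ed).1) || (a == (val ed).2)
    | inr (ed, i), inr (ed', j) => (ed == ed') && (i != j)
    end.

(* Main.v *)
Require Import Defs.
From mathcomp Require Import all_boot.
From mathcomp Require Import zify.
Set Implicit Arguments. Unset Strict Implicit. Unset Printing Implicit Defensive.

Lemma walkP (T : finType) (e : rel T) u v k :
  reflect (exists p : seq T, [/\ size p = k, path e u p & last u p = v])
          (walk_of_len e u v k).
Proof.
apply: (iffP existsP) => [[t /andP[Hp /eqP Hl]] | [p [Hs Hp Hl]]].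
  by exists (val t); rewrite size_tuple.
have Hs' : size p == k by rewrite Hs.
by exists (Tuple Hs'); rewrite /= Hp Hl eqxx.
Qed.

Lemma walk0 (T : finType) (e : rel T) u v : walk_of_len e u v 0 = (u == v).
Proof.
apply/walkP/eqP => [[p [Hs Hp Hl]]|->]; last by exists [::].
by case: p Hs Hp Hl => // _ _ <-.
Qed.

Lemma walk1 (T : finType) (e : rel T) u v : walk_of_len e u v 1 = e u v.
Proof.
apply/walkP/idP => [[p [Hs Hp Hl]]|H].
  by case: p Hs Hp Hl => [|x [|y p]] //= _ /andP[H _] <-.
by exists [:: v]; rewrite /= H.
Qed.

Lemma walk2 (T : finType) (e : rel T) u w v : e u w -> e w v -> walk_of_len e u v 2.
Proof. by move=> H1 H2; apply/walkP; exists [:: w; v]; rewrite /= H1 H2. Qed.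

Lemma find_iota_le (P : pred nat) N k : k < N -> P k -> find P (iota 0 N) <= k.
Proof.
move=> kN Pk; rewrite leqNgt; apply/negP => /(before_find 0).
by rewrite nth_iota // add0n Pk.
Qed.

Lemma find_iota_ge (P : pred nat) N k : k <= N -> (forall i, i < k -> ~~ P i) ->
  k <= find P (iota 0 N).
Proof.
move=> kN H; rewrite leqNgt; apply/negP => Hlt.
have Hh : has P (iota 0 N) by rewrite has_find size_iota; apply: leq_trans Hlt kN.
have := nth_find 0 Hh; rewrite nth_iota; last by move: Hh; rewrite has_find size_iota.
by rewrite add0n; apply/negP/H.
Qed.

Lemma dist_le (T : finType) (e : rel T) u v k :
  walk_of_len e u v k -> k < #|T| -> dist e u v <= k.
Proof. by move=> W kN; apply: find_iota_le. Qed.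

Lemma dist_ge (T : finType) (e : rel T) u v k :
  k <= #|T| -> (forall i, i < k -> ~~ walk_of_len e u v i) -> k <= dist e u v.
Proof. by move=> kN H; apply: find_iota_ge. Qed.

Lemma dist_leN (T : finType) (e : rel T) u v : dist e u v <= #|T|.
Proof. by rewrite /dist -{2}(size_iota 0 #|T|) find_size. Qed.

Lemma dist_walk (T : finType) (e : rel T) u v :
  dist e u v < #|T| -> walk_of_len e u v (dist e u v).
Proof.
rewrite /dist => H.
have Hh : has (fun k => walk_of_len e u v k) (iota 0 #|T|).
  by rewrite has_find size_iota.
by have := nth_find 0 Hh; rewrite nth_iota // add0n.
Qed.

Lemma dist_self (T : finType) (e : rel T) u : dist e u u = 0.
Proof.
apply/eqP; rewrite -leqn0; apply: dist_le; first by rewrite walk0.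
by apply/card_gt0P; exists u.
Qed.

Lemma dist_gt0 (T : finType) (e : rel T) u v : u != v -> 0 < dist e u v.
Proof.
move=> uv; apply: dist_ge => [|i]; first by apply/card_gt0P; exists u.
by rewrite ltnS leqn0 => /eqP ->; rewrite walk0.
Qed.

Lemma dist_1 (T : finType) (e : rel T) u v : 1 < #|T| -> u != v -> e u v -> dist e u v = 1.
Proof.
move=> N uv H; apply/eqP; rewrite eqn_leq dist_gt0 // andbT.
by apply: dist_le; rewrite ?walk1.
Qed.

Lemma dist_ge2 (T : finType) (e : rel T) u v : 1 < #|T| -> u != v -> ~~ e u v -> 2 <= dist e u v.
Proof.
move=> N uv H; apply: dist_ge => // i; case: i => [|[|i]] // _.
  by rewrite walk0.
by rewrite walk1.
Qed.

Lemma dist_le2 (T : finType) (e : rel T) u w v : 2 < #|T| -> e u w -> e w v -> dist e u v <= 2.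
Proof. by move=> N H1 H2; apply: dist_le => //; apply: walk2 H1 H2. Qed.

Lemma dist_eq1 (T : finType) (e : rel T) u v : dist e u v = 1 -> e u v.
Proof.
move=> H; have : walk_of_len e u v (dist e u v).
  apply: dist_walk; rewrite H; case: (ltnP 1 #|T|) => // HT.
  have := dist_leN e u v; rewrite H => HT1.
  have HT2 : #|T| = 1 by apply/eqP; rewrite eqn_leq HT HT1.
  have uv : u = v by apply: (card_le1_eqP (A := T)); rewrite ?HT2.
  by move: H; rewrite uv dist_self.
by rewrite H walk1.
Qed.

Lemma dist_eq0 (T : finType) (e : rel T) u v : dist e u v = 0 -> u = v.
Proof.
move=> H; apply/eqP; apply/negPn/negP => /(dist_gt0 e); by rewrite H.
Qed.

Lemma twin_dist_le (T : finType) (e : rel T) x y w :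
  irreflexive e -> (forall z, z != x -> z != y -> e x z = e y z) ->
  y != w -> dist e x w <= dist e y w.
Proof.
move=> Hirr Htw yw.
case: (ltnP (dist e y w) #|T|) => Hd; last by apply: leq_trans (dist_leN _ _ _) Hd.
have := dist_walk Hd; move/walkP => [[|p1 p] [Hs Hp Hl]].
  by move: Hs Hl yw => <- /= ->; rewrite eqxx.
move: Hp => /= /andP[H1 H2].
case: (eqVneq p1 x) => [E|Ne].
  subst p1; apply: (@leq_trans (size p)); last by rewrite -Hs.
  apply: dist_le; last by rewrite (leq_ltn_trans _ Hd) // -Hs.
  by apply/walkP; exists p.
apply: dist_le => //; apply/walkP; exists (p1 :: p); split => //=.
rewrite H2 andbT Htw //; apply/negP => /eqP E; subst p1.
by rewrite Hirr in H1.
Qed.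

Lemma bigmin_val (T : finType) (S : {set T}) (F : T -> nat) N d :
  d <= N -> (exists2 w, w \in S & F w = d) -> (forall w, w \in S -> d <= F w) ->
  \big[minn/N]_(x in S) F x = d.
Proof.
move=> dN [w wS Fw] H; apply/eqP; rewrite eqn_leq; apply/andP; split.
  rewrite -Fw -big_filter.
  have : w \in [seq i <- index_enum T | i \in S] by rewrite mem_filter wS mem_index_enum.
  elim: [seq i <- index_enum T | i \in S] => // a s IH.
  rewrite inE big_cons => /orP [/eqP <- | /IH]; first exact: geq_minl.
  by move=> H'; apply: leq_trans H'; apply: geq_minr.
apply: (big_ind (fun x => d <= x)) => // x y Hx Hy.
by rewrite leq_min Hx Hy.
Qed.

Lemma bigmin_attain (T : finType) (S : {set T}) (F : T -> nat) N :
  \big[minn/N]_(x in S) F x < N ->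
  exists2 w, w \in S & F w = \big[minn/N]_(x in S) F x.
Proof.
have : (\big[minn/N]_(x in S) F x == N) || [exists w in S, F w == \big[minn/N]_(x in S) F x].
  apply: (big_ind (fun y => (y == N) || [exists w in S, F w == y])).
  - by rewrite eqxx.
  - move=> x y Hx Hy /=; case: (leqP x y) => Hxy.
      done.
    done.
  - move=> i Hi; apply/orP; right; apply/existsP; exists i; by rewrite Hi eqxx.
case/orP => [/eqP -> | /existsP [w /andP [wS /eqP E]]]; first by rewrite ltnn.
by move=> _; exists w.
Qed.

Lemma ds_some (T : finType) (e : rel T) v (S : {set T}) w0 : w0 \in S ->
  dist_set e v S = Some (\big[minn/#|T|]_(x in S) dist e v x).
Proof. by rewrite /dist_set; case: pickP => // /(_ w0) ->. Qed.

Lemma ds_none (T : finType) (e : rel T) v (S : {set T}) : (forall w, w \notin S) ->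
  dist_set e v S = None.
Proof. by move=> H; rewrite /dist_set; case: pickP => // w; rewrite (negbTE (H w)). Qed.

Lemma ds0 (T : finType) (e : rel T) v (S : {set T}) : v \in S -> dist_set e v S = Some 0.
Proof.
move=> vS; rewrite (ds_some _ _ vS); congr Some; apply: bigmin_val => //.
by exists v; rewrite ?dist_self.
Qed.

Lemma ds1 (T : finType) (e : rel T) v w (S : {set T}) : 1 < #|T| ->
  v \notin S -> w \in S -> e v w -> dist_set e v S = Some 1.
Proof.
move=> N vS wS H; rewrite (ds_some _ _ wS); congr Some; apply: bigmin_val.
- exact: ltnW.
- exists w => //; apply: dist_1 => //; apply: contraNneq vS => ->; done.
- move=> x xS; apply: dist_gt0; apply: contraNneq vS => ->; done.
Qed.

Lemma ds2 (T : finType) (e : rel T) v t w (S : {set T}) : 2 < #|T| ->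
  v \notin S -> (forall x, x \in S -> ~~ e v x) -> w \in S -> e v t -> e t w ->
  dist_set e v S = Some 2.
Proof.
move=> N vS Hn wS H1 H2; rewrite (ds_some _ _ wS); congr Some; apply: bigmin_val.
- exact: ltnW.
- exists w => //; apply/eqP; rewrite eqn_leq (dist_le2 N H1 H2) /=.
  apply: dist_ge2; [exact: ltnW | apply: contraNneq vS => -> // | exact: Hn].
- move=> x xS; apply: dist_ge2; [exact: ltnW | apply: contraNneq vS => -> // | exact: Hn].
Qed.

Lemma ds_inv (T : finType) (e : rel T) v (S : {set T}) d : 1 < #|T| -> d <= 1 ->
  dist_set e v S = Some d -> exists2 w, w \in S & dist e v w = d.
Proof.
move=> N d1; rewrite /dist_set; case: pickP => // w0 Hw0 [E].
have := @bigmin_attain T S (fun x => dist e v x) #|T|.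
by rewrite E => /(_ (leq_ltn_trans d1 N)).
Qed.

Lemma twin_code (T : finType) (e : rel T) k (c : T -> 'I_k) x y :
  irreflexive e -> (forall z, z != x -> z != y -> e x z = e y z) -> c x = c y ->
  rainbow_code e c x = rainbow_code e c y.
Proof.
move=> Hirr Htw Hc; apply/ffunP => i; rewrite !ffunE.
case: (boolP (x \in color_class c i)) => Hx.
  have Hy : y \in color_class c i by move: Hx; rewrite !inE Hc.
  by rewrite !ds0.
have Hy : y \notin color_class c i by move: Hx; rewrite !inE Hc.
rewrite /dist_set; case: pickP => // w0 _; congr Some; apply: eq_bigr => w Hw.
have xw : x != w by apply: contraNneq Hx => ->.
have yw : y != w by apply: contraNneq Hy => ->.
apply/eqP; rewrite eqn_leq; apply/andP; split.
  apply: twin_dist_le => // z zx zy; exact: Htw.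
apply: twin_dist_le => // z zx zy; symmetry; exact: Htw.
Qed.


Notation e1 g := (val g).1.
Notation e2 g := (val g).2.

Lemma e12 m (g : KEdge m) : e1 g < e2 g.
Proof. exact: valP g. Qed.

Lemma inlE (A B : eqType) (a b : A) : (inl a == inl b :> A + B) = (a == b).
Proof. by apply/eqP/eqP => [[]|->]. Qed.
Lemma inrE (A B : eqType) (a b : B) : (inr a == inr b :> A + B) = (a == b).
Proof. by apply/eqP/eqP => [[]|->]. Qed.
Lemma inlrE (A B : eqType) (a : A) (b : B) : (inl a == inr b :> A + B) = false.
Proof. by apply/eqP. Qed.
Lemma inrlE (A B : eqType) (a : A) (b : B) : (inr b == inl a :> A + B) = false.
Proof. by apply/eqP. Qed.
Lemma pairE (A B : eqType) (a a' : A) (b b' : B) : ((a, b) == (a', b')) = (a == a') && (b == b').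
Proof. by []. Qed.

Lemma cadj_irr m n : irreflexive (@corona_adj m n).
Proof. by case=> [a|[g i]] /=; rewrite ?eqxx ?andbF. Qed.

Lemma cadj_sym m n (x y : corona_vertex m n) : corona_adj x y = corona_adj y x.
Proof.
case: x => [a|[g i]]; case: y => [b|[g' j]] //=; first by rewrite eq_sym.
by rewrite eq_sym (eq_sym i).
Qed.

Lemma card_V m n : 2 < m -> 2 < #|corona_vertex m n|.
Proof.
move=> Hm; rewrite /corona_vertex card_sum card_ord.
by apply: leq_trans Hm _; apply: leq_addr.
Qed.

Lemma adj_inr m n (g : KEdge m) (j : 'I_n) w : corona_adj (inr (g, j)) w ->
  [\/ w = inl (e1 g), w = inl (e2 g) | exists j', w = inr (g, j')].
Proof.
case: w => [a|[g' j']] /=.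
  by case/orP => /eqP ->; [apply: Or31 | apply: Or32].
by case/andP => /eqP <- _; apply: Or33; exists j'.
Qed.

Definition nearc m n k (c : corona_vertex m n -> 'I_k) x (i : 'I_k) :=
  [exists w, ((w == x) || corona_adj x w) && (c w == i)].

Lemma near_ds m n k (c : corona_vertex m n -> 'I_k) x i : 2 < m ->
  nearc c x i = (dist_set (@corona_adj m n) x (color_class c i) \in [:: Some 0; Some 1]).
Proof.
move=> Hm; have HN := card_V n Hm.
apply/idP/idP.
  case/existsP => w /andP [/orP [/eqP -> | Hadj] /eqP Hc].
    by rewrite ds0 ?inE ?Hc ?eqxx.
  case: (boolP (x \in color_class c i)) => Hx; first by rewrite ds0.
  rewrite (ds1 (w := w)) //; [exact: ltnW | by rewrite inE Hc].
have HN1 : 1 < #|corona_vertex m n| by exact: ltnW.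
rewrite !inE; case/orP => /eqP H.
  have [w] := ds_inv HN1 (isT : 0 <= 1) H.
  rewrite inE => /eqP Hc /dist_eq0 Ew; subst w.
  by apply/existsP; exists x; rewrite eqxx Hc eqxx.
have [w] := ds_inv HN1 (isT : 1 <= 1) H.
rewrite inE => /eqP Hc /dist_eq1 Ha.
by apply/existsP; exists w; rewrite Ha orbT Hc eqxx.
Qed.

Lemma near_code m n k (c : corona_vertex m n -> 'I_k) x y i : 2 < m ->
  rainbow_code (@corona_adj m n) c x = rainbow_code (@corona_adj m n) c y ->
  nearc c x i = nearc c y i.
Proof.
move=> Hm E; rewrite !near_ds //.
by have := congr1 (fun f : {ffun 'I_k -> option nat} => f i) E; rewrite !ffunE => ->.
Qed.

Lemma code_color m n k (c : corona_vertex m n -> 'I_k) x y : 2 < m ->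
  rainbow_code (@corona_adj m n) c x = rainbow_code (@corona_adj m n) c y ->
  c x = c y.
Proof.
move=> Hm E; have := congr1 (fun f : {ffun 'I_k -> option nat} => f (c x)) E; rewrite !ffunE.
have HN1 : 1 < #|corona_vertex m n| by apply: ltnW; apply: card_V.
rewrite ds0 ?inE ?eqxx // => /esym H.
have [w] := ds_inv HN1 (isT : 0 <= 1) H.
by rewrite inE => /eqP <- /dist_eq0 ->.
Qed.

Lemma rainbow_corona m n k (c : corona_vertex m n -> 'I_k) :
  (forall a b, c (inl a) = c (inl b) -> a = b) ->
  rainbow_vertex_coloring (@corona_adj m n) c.
Proof.
move=> Hinj x y xy.
case: (boolP (corona_adj x y)) => Hxy.
  by exists [:: y]; rewrite /= Hxy eqxx /= inE xy.
case: x y xy Hxy => [a|[g i]] [b|[g' j]] xy Hxy.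
- by move: Hxy xy => /= /negbNE/eqP ->; rewrite eqxx.
- exists [:: inl (e1 g'); inr (g', j)].
  move: Hxy => /=; rewrite negb_or => /andP [H1 H2].
  by rewrite /= !inE !eqxx /= ?orbT ?andbT /= inlE inlrE orbF andbb.
- exists [:: inl (e1 g); inl b].
  move: Hxy => /=; rewrite negb_or => /andP [H1 H2].
  by rewrite /= !inE !eqxx /= ?orbT ?andbT /= ?inlE ?inrlE ?inlrE ?orbF andbb eq_sym.
- case: (eqVneq g g') => [E|Ngg].
    by move: Hxy xy => /=; rewrite -E eqxx /= negbK => /eqP ->; rewrite eqxx.
  case: (eqVneq (e1 g) (e1 g')) => [E1|N1].
    exists [:: inl (e1 g); inr (g', j)].
    rewrite /= !inE !eqxx /= ?orbT ?andbT /= ?inlE ?inrlE ?inlrE ?inrE ?orbF.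
    by apply/andP; split; [apply/orP; left; apply/eqP | apply: contra Ngg => /eqP [->]].
  exists [:: inl (e1 g); inl (e1 g'); inr (g', j)].
  rewrite /= !inE !eqxx /= ?orbT ?andbT /= ?inlE ?inrlE ?inlrE ?inrE ?orbF ?andbT.
  apply/and3P; split => //; first by apply/andP; split => //; apply: contra Ngg => /eqP [->].
  by apply/negP => /eqP /Hinj /eqP; apply/negP.
Qed.


Definition nearN m n (col : corona_vertex m n -> nat) x z :=
  [exists w, ((w == x) || corona_adj x w) && (col w == z)].

Lemma nearN_inr_false m n (col : corona_vertex m n -> nat) g j z :
  (forall j', col (inr (g, j')) != z) -> col (inl (e1 g)) != z -> col (inl (e2 g)) != z ->
  nearN col (inr (g, j)) z = false.
Proof.
move=> H1 H2 H3; rewrite /nearN; apply: negbTE; apply/negP => /existsP [w /andP [/orP [/eqP E | Ha] /eqP Hw]].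
  by move: (H1 j); rewrite -E Hw eqxx.
case: (adj_inr Ha) => [E|E|[j' E]]; move: Hw; rewrite E => Hw.
- by move: H2; rewrite Hw eqxx.
- by move: H3; rewrite Hw eqxx.
- by move: (H1 j'); rewrite Hw eqxx.
Qed.

Lemma UB m n K (col : corona_vertex m n -> nat) : 2 < m ->
  (forall x, col x < K.+1) ->
  (forall a b, col (inl a) = col (inl b) -> a = b) ->
  (forall g i j, col (inr (g, i)) = col (inr (g, j)) -> i = j) ->
  (forall g g', g != g' -> exists z, [/\ exists j, col (inr (g, j)) = z,
       forall j, col (inr (g', j)) != z, col (inl (e1 g')) != z & col (inl (e2 g')) != z]) ->
  (forall g, exists z, [/\ forall j, col (inr (g, j)) != z, col (inl (e1 g)) != z,
       col (inl (e2 g)) != z & forall v, nearN col (inl v) z]) ->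
  locating_rainbow_coloring (@corona_adj m n) (fun x => @inord K (col x)).
Proof.
move=> Hm Hb H1 H2 H3 H4.
set c := fun x => @inord K (col x).
have cE : forall x y, (c x = c y) <-> (col x = col y).
  move=> x y; rewrite /c; split => [/(congr1 val)|->] //=.
  by rewrite !inordK.
have nE : forall x z, z < K.+1 -> nearc c x (inord z) = nearN col x z.
  move=> x z Hz; apply: eq_existsb => w; congr (_ && _).
  rewrite /c; apply/eqP/eqP => [/(congr1 val) /=|->] //; by rewrite !inordK.
split.
  by apply: rainbow_corona => a b /cE /H1.
move=> x y E.
have /cE Hcol := code_color Hm E.
have NE : forall z, z < K.+1 -> nearN col x z = nearN col y z.
  by move=> z Hz; rewrite -!nE //; apply: near_code.
case: x y E Hcol NE => [a|[g i]] [b|[g' j]] E Hcol NE.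
- by congr inl; apply: H1.
- have [z [Hz1 Hz2 Hz3 Hz4]] := H4 g'.
  have Hzb : z < K.+1.
    by by move: (Hz4 a); rewrite /nearN => /existsP [w /andP [_ /eqP <-]].
  by move: (NE z Hzb); rewrite Hz4 nearN_inr_false.
- have [z [Hz1 Hz2 Hz3 Hz4]] := H4 g.
  have Hzb : z < K.+1.
    by by move: (Hz4 b); rewrite /nearN => /existsP [w /andP [_ /eqP <-]].
  by move: (NE z Hzb); rewrite Hz4 nearN_inr_false.
- case: (eqVneq g g') => [Eg|Ngg].
    by move: Hcol; rewrite -Eg => /H2 ->.
  have [z [[j0 Hj0] Hz2 Hz3 Hz4]] := H3 g g' Ngg.
  have Hzb : z < K.+1 by rewrite -Hj0.
  move: (NE z Hzb); rewrite (nearN_inr_false _ Hz2) //.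
  move=> /negbT /negP Hn; exfalso; apply: Hn; rewrite /nearN; apply/existsP; exists (inr (g, j0)); rewrite Hj0 eqxx andbT.
  case: (eqVneq j0 i) => [->|Nj]; first by rewrite eqxx.
  by rewrite /= eqxx /= (eq_sym i) Nj orbT.
Qed.


Definition endpt m (v : 'I_m) (g : KEdge m) := (v == e1 g) || (v == e2 g).

Lemma edge_ex m (a b : 'I_m) : a != b -> exists h : KEdge m, endpt a h && endpt b h.
Proof.
case: (ltngtP a b) => [H|H|/val_inj ->]; last by rewrite eqxx.
- by exists (exist _ (a, b) H); rewrite /endpt /= !eqxx orbT.
- by exists (exist _ (b, a) H); rewrite /endpt /= !eqxx orbT.
Qed.

Lemma endpt3 m (g : KEdge m) x y w : endpt x g -> endpt y g -> endpt w g ->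
  x != y -> x != w -> y != w -> False.
Proof.
rewrite /endpt => /orP [] /eqP -> /orP [] /eqP -> /orP [] /eqP -> //; rewrite ?eqxx //.
Qed.

Lemma copy_twins m n (g : KEdge m) (i j : 'I_n) z :
  z != inr (g, i) -> z != inr (g, j) ->
  corona_adj (inr (g, i)) z = corona_adj (inr (g, j)) z.
Proof.
case: z => [a|[g' l]] //= H1 H2.
case: (eqVneq g g') => [E|] //=; subst g'.
have -> : i != l by apply: contra H1 => /eqP ->.
by have -> : j != l by apply: contra H2 => /eqP ->.
Qed.

Lemma copy_inj m n k (c : corona_vertex m n -> 'I_k) g i j :
  locating_rainbow_coloring (@corona_adj m n) c ->
  c (inr (g, i)) = c (inr (g, j)) -> i = j.
Proof.
move=> [_ Hinj] Hc.
have : inr (g, i) = inr (g, j) :> corona_vertex m n.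
  apply: Hinj; apply: twin_code => //; first exact: cadj_irr.
  by move=> z; apply: copy_twins.
by case.
Qed.

Definition Qg m n (g : KEdge m) (w : corona_vertex m n) :=
  match w with inl v => endpt v g | inr (g', _) => g' == g end.

Lemma Q_clique m n g (x y : corona_vertex m n) : Qg g x -> Qg g y -> x != y ->
  corona_adj x y.
Proof.
case: x => [a|[g1 i]]; case: y => [b|[g2 j]] /=.
- rewrite /endpt inlE => /orP [] /eqP -> /orP [] /eqP -> //; rewrite ?eqxx //.
- by move=> Ha /eqP ->.
- by move=> /eqP -> Hb.
- move=> /eqP -> /eqP ->; rewrite inrE pairE eqxx /= => ->; by [].
Qed.

Lemma clique_eq m n k (c : corona_vertex m n -> 'I_k) g : 2 < m ->
  locating_rainbow_coloring (@corona_adj m n) c ->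
  (forall i, exists w, Qg g w /\ c w = i) ->
  forall x y, Qg g x -> Qg g y -> c x = c y -> x = y.
Proof.
move=> Hm [_ Hinj] Hall.
have HN := card_V n Hm.
have code : forall x, Qg g x -> rainbow_code (@corona_adj m n) c x =
                              [ffun i => Some (nat_of_bool (i != c x))].
  move=> x Qx; apply/ffunP => i; rewrite !ffunE.
  case: (eqVneq i (c x)) => [->|Ni] /=; first by rewrite ds0 // inE.
  have [w [Qw Hw]] := Hall i.
  apply: (ds1 (w := w)); first exact: ltnW.
  - by rewrite inE eq_sym.
  - by rewrite inE Hw.
  - apply: (Q_clique (g := g)) => //; apply: contra Ni => /eqP ->; by rewrite Hw.
move=> x y Qx Qy Hc; apply: Hinj; by rewrite !code // Hc.
Qed.

Lemma edge0_ex m : 1 < m -> exists g : KEdge m, true.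
Proof.
move=> Hm.
have H0 : 0 < m by apply: ltnW.
by exists (exist _ (Ordinal H0, Ordinal Hm) (isT : 0 < 1)).
Qed.

Lemma L1 m n k (c : corona_vertex m n -> 'I_k) : 2 < m -> k <= n ->
  ~ locating_rainbow_coloring (@corona_adj m n) c.
Proof.
move=> Hm Hk Hloc.
have [g0 _] := edge0_ex (ltnW Hm).
pose f j := c (inr (g0, j)).
have finj : injective f by move=> i j; apply: copy_inj.
have Hnk : n <= k by have := leq_card f finj; rewrite !card_ord.
have Hon : forall i, i \in codom f.
  apply: inj_card_onto => //; rewrite !card_ord; lia.
have Hall : forall i, exists w, Qg g0 w /\ c w = i.
  move=> i; have /codomP [j ->] := Hon i.
  by exists (inr (g0, j)); rewrite /= eqxx.
have /codomP [j Hj] := Hon (c (inl (e1 g0))).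
have := clique_eq Hm Hloc Hall (x := inl (e1 g0)) (y := inr (g0, j)).
by rewrite /= /endpt eqxx eqxx => /(_ isT isT Hj).
Qed.


Lemma L2 m n (c : corona_vertex m n -> 'I_n.+1) : 2 < m -> 1 < n ->
  n.+1 < #|{: {p : 'I_m * 'I_m | p.1 < p.2}}| -> ~ locating_rainbow_coloring (@corona_adj m n) c.
Proof.
move=> Hm Hn HE Hloc.
have HN := card_V n Hm.
have HN1 : 1 < #|corona_vertex m n| by exact: ltnW.
pose f g j := c (inr (g, j)).
have finj : forall g, injective (f g) by move=> g i j; apply: copy_inj.
pose miss g := odflt ord0 [pick z | z \notin codom (f g)].
have MF0 : forall g, miss g \notin codom (f g).
  move=> g; rewrite /miss; case: pickP => [z -> //|H] /=.
  have : #|'I_n.+1| <= #|codom (f g)|.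
    apply: subset_leq_card; apply/subsetP => z _.
    by have := H z; move/negbT; rewrite negbK.
  by rewrite card_codom // !card_ord ltnn.
have MF1 : forall g j, c (inr (g, j)) != miss g.
  move=> g j; apply: contra (MF0 g) => /eqP <-; exact: codom_f.
have MF2 : forall g i, i != miss g -> exists j, c (inr (g, j)) = i.
  move=> g i Ni; case: (boolP (i \in codom (f g))) => [/codomP [j ->]|Hi].
    by exists j.
  have : #|[set i; miss g]| <= #|[predC [pred z | z \in codom (f g)]]|.
    apply: subset_leq_card; apply/subsetP => z; rewrite !inE.
    by case/orP => /eqP ->.
  rewrite cards2 Ni.
  have := cardC [pred z | z \in codom (f g)].
  have -> : #|[pred z | z \in codom (f g)]| = n.
    rewrite -[RHS](card_ord n) -(card_codom (finj g)); apply: eq_card => z; by rewrite inE.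
  rewrite card_ord /= => H1 H2; exfalso; move: H1 H2; set X := #|_|; rewrite /nat_of_bool; lia.
have NC : forall g a, endpt a g -> c (inl a) != miss g.
  move=> g a Ha; apply/negP => /eqP Hca.
  have Hall : forall i, exists w, Qg g w /\ c w = i.
    move=> i; case: (eqVneq i (miss g)) => [->|Ni].
      by exists (inl a).
    have [j Hj] := MF2 g i Ni; by exists (inr (g, j)); rewrite /= eqxx.
  pose b := if a == e1 g then e2 g else e1 g.
  have Hb : endpt b g by rewrite /b /endpt; case: (a == e1 g); rewrite eqxx ?orbT.
  have Nab : a != b.
    rewrite /b; move: Ha; rewrite /endpt; have := e12 g.
    case: (eqVneq a (e1 g)) => [->|N1] /= H.
      by move=> _; apply/eqP => /(congr1 val) /=; lia.
    by move=> _.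
  have CE := clique_eq Hm Hloc Hall.
  case: (eqVneq (c (inl b)) (miss g)) => [Hcb|Nb].
    have := CE (inl a) (inl b) Ha Hb; rewrite Hca Hcb => /(_ erefl) [] /eqP.
    by rewrite (negbTE Nab).
  have [j Hj] := MF2 g _ Nb.
  by have := CE (inl b) (inr (g, j)) Hb; rewrite /= eqxx Hj => /(_ isT erefl).
have Hn0 : 0 < n by apply: ltnW.
have Pair : forall g g', g != g' -> miss g = miss g' ->
    (forall j j', dist_set (@corona_adj m n) (inr (g, j)) (color_class c (miss g)) =
                  dist_set (@corona_adj m n) (inr (g', j')) (color_class c (miss g))) -> False.
  move=> g g' Ngg Em Hd.
  pose j := Ordinal Hn0.
  have Hne : c (inr (g, j)) != miss g' by rewrite -Em MF1.
  have [j' Hj'] := MF2 g' (c (inr (g, j))) Hne.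
  have : inr (g, j) = inr (g', j') :> corona_vertex m n.
    case: Hloc => _ Hinj; apply: Hinj; apply/ffunP => i; rewrite !ffunE.
    case: (eqVneq i (c (inr (g, j)))) => [Ei|Ni].
      by rewrite !ds0 // inE ?Hj' Ei.
    case: (eqVneq i (miss g)) => [->|Nm]; first exact: Hd.
    have [j1 Hj1] := MF2 g i Nm.
    have Nm' : i != miss g' by rewrite -Em.
    have [j2 Hj2] := MF2 g' i Nm'.
    have Nj1 : j != j1 by apply: contra Ni => /eqP E; rewrite E Hj1.
    have Nj2 : j' != j2 by apply: contra Ni => /eqP E; rewrite -Hj' E Hj2.
    rewrite (ds1 (w := inr (g, j1))); [|done| by rewrite inE eq_sym | by rewrite inE Hj1 | by rewrite /= eqxx Nj1].
    rewrite (ds1 (w := inr (g', j2))); [done|done| by rewrite inE Hj' eq_sym | by rewrite inE Hj2 | by rewrite /= eqxx Nj2].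
  by case => E _; move: Ngg; rewrite E eqxx.
have D2 : forall g j t w, corona_adj (inr (g, j)) t -> corona_adj t w -> c w = miss g ->
    dist_set (@corona_adj m n) (inr (g, j)) (color_class c (miss g)) = Some 2.
  move=> g j t w H1 H2 Hw.
  apply: (ds2 (t := t) (w := w)) => //.
  - by rewrite inE MF1.
  - move=> x; rewrite inE => /eqP Hx; apply/negP => /adj_inr [E|E|[j' E]]; move: Hx; rewrite E.
    + by move/eqP; rewrite (negbTE (NC _ _ _)) // /endpt eqxx.
    + by move/eqP; rewrite (negbTE (NC _ _ _)) // /endpt eqxx orbT.
    + by move/eqP; rewrite (negbTE (MF1 _ _)).
  - by rewrite inE Hw.
have [g [g' [Ngg Em]]] : exists g g', g != g' /\ miss g = miss g'.
  case: (boolP [exists g, exists g', (g != g') && (miss g == miss g')]).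
    by case/existsP => g /existsP [g' /andP [H1 /eqP H2]]; exists g, g'.
  move=> H; have Hinj : injective miss.
    move=> g g' E; apply/eqP; apply/negPn/negP => N; move/negP: H; apply.
    by apply/existsP; exists g; apply/existsP; exists g'; rewrite N E eqxx.
  have : #|{: {p : 'I_m * 'I_m | p.1 < p.2}}| <= n.+1.
    by have := leq_card miss Hinj; rewrite card_ord.
  by move: HE; lia.
have Nend : forall h a, endpt a h -> forall b, c (inl b) = miss h -> a != b.
  move=> h a Ha b Hb; apply: contra (NC h a Ha) => /eqP ->; by rewrite Hb.
case: (boolP [exists a, c (inl a) == miss g]) => [/existsP [a /eqP Ha]|NA].
  apply: (Pair g g' Ngg Em) => j j'.
  have Ha' : c (inl a) = miss g' by rewrite -Em.
  rewrite (D2 g j (inl (e1 g)) (inl a)) //=; [ | by rewrite eqxx | by apply: (Nend g) => //; rewrite /endpt eqxx].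
  rewrite Em (D2 g' j' (inl (e1 g')) (inl a)) //=; [by rewrite eqxx | by apply: (Nend g') => //; rewrite /endpt eqxx].
case: (boolP [exists s, exists j0, c (inr (s, j0)) == miss g]) => [/existsP [s /existsP [j0 /eqP Hs]]|NB].
  case: (boolP [forall v, exists s', exists j', (c (inr (s', j')) == miss g) && endpt v s']) => [/forallP Hv|/forallPn [v Hv]].
    apply: (Pair g g' Ngg Em) => j j'.
    have [s1 /existsP [j1 /andP [/eqP Hc1 He1]]] := existsP (Hv (e1 g)).
    have [s2 /existsP [j2 /andP [/eqP Hc2 He2]]] := existsP (Hv (e1 g')).
    rewrite (D2 g j (inl (e1 g)) (inr (s1, j1))) //=; last by rewrite eqxx.
    by rewrite Em (D2 g' j' (inl (e1 g')) (inr (s2, j2))) //= ?eqxx // -Em.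
  have Nv1 : v != e1 s.
    apply: contra Hv => /eqP ->; apply/existsP; exists s; apply/existsP; exists j0.
    by rewrite Hs eqxx /endpt eqxx.
  have Nv2 : v != e2 s.
    apply: contra Hv => /eqP ->; apply/existsP; exists s; apply/existsP; exists j0.
    by rewrite Hs eqxx /endpt eqxx orbT.
  have N12 : e1 s != e2 s by apply: contraTneq (e12 s) => ->; rewrite ltnn.
  have [h1 /andP [Hv1 Hs1]] := edge_ex Nv1.
  have [h2 /andP [Hv2 Hs2]] := edge_ex Nv2.
  have Mh : forall h, endpt v h -> miss h = miss g.
    move=> h Hvh; apply/eqP; apply/negPn/negP => Nh.
    have Nh' : miss g != miss h by rewrite eq_sym.
    have [j Hj] := MF2 h (miss g) Nh'.
    move/negP: Hv; apply; apply/existsP; exists h; apply/existsP; exists j.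
    by rewrite Hj eqxx.
  have Nh : h1 != h2.
    by apply/negP => /eqP E; subst h2; apply: (endpt3 Hv1 Hs1 Hs2).
  apply: (Pair h1 h2 Nh); first by rewrite !Mh.
  move=> j j'.
  rewrite (D2 h1 j (inl (e1 s)) (inr (s, j0))) //=; rewrite ?eqxx ?Mh //.
  by rewrite -(Mh h2 Hv2) (D2 h2 j' (inl (e2 s)) (inr (s, j0))) //= ?eqxx ?orbT ?Mh.
apply: (Pair g g' Ngg Em) => j j'.
have Hno : forall w, w \notin color_class c (miss g).
  case=> [a|[s j0]]; rewrite inE.
  - by apply: contra NA => H; apply/existsP; exists a.
  - by apply: contra NB => H; apply/existsP; exists s; apply/existsP; exists j0.
by rewrite !ds_none.
Qed.


Definition skip (h j : nat) := if j < h then j else j.+1.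

Lemma skip_inj h i j : skip h i = skip h j -> i = j.
Proof. by rewrite /skip; do 2 case: ifP; lia. Qed.

Lemma skip_neq h j : skip h j != h.
Proof. by rewrite /skip; case: ifP; lia. Qed.

Definition sx (a : nat) := if a == 0 then 1 else 0.
Definition sy p (a : nat) := if a == 0 then 2 else if a == 1 then p else a.-1.

Lemma sxy_props p a b : 2 <= p -> a <= p -> b <= p ->
  [/\ sx a < sy p a, sy p a <= p, a != sx a, a != sy p a &
      (sx a == sx b) && (sy p a == sy p b) -> a = b].
Proof.
rewrite /sx /sy => Hp Ha Hb.
by case: (eqVneq a 0) => Ha0; case: (eqVneq a 1) => Ha1;
  case: (eqVneq b 0) => Hb0; case: (eqVneq b 1) => Hb1; split; lia.
Qed.

Lemma two_other p (v : 'I_p.+1) : 2 <= p ->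
  exists u1 u2 : 'I_p.+1, [/\ v != u1, v != u2 & u1 != u2].
Proof.
move=> Hp.
exists (inord (if v == 0 :> nat then 1 else 0)), (inord (if v == 2 :> nat then 1 else 2)).
split; apply/eqP => /(congr1 val) /=; rewrite !inordK; try case: ifP; try case: ifP; lia.
Qed.

Lemma incident2 p (v : 'I_p.+1) : 2 <= p ->
  exists h1 h2 : KEdge p.+1, [/\ endpt v h1, endpt v h2 & h1 != h2].
Proof.
move=> Hp; have [u1 [u2 [N1 N2 N12]]] := two_other v Hp.
have [h1 /andP [H1 H1']] := edge_ex N1.
have [h2 /andP [H2 H2']] := edge_ex N2.
exists h1, h2; split => //; apply/negP => /eqP E; subst h2.
exact: (endpt3 H1 H1' H2').
Qed.

Lemma constr1 p n : 2 < p.+1 -> 1 < n ->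
  #|{: {q : 'I_p.+1 * 'I_p.+1 | q.1 < q.2}}| <= n.+1 ->
  exists c : corona_vertex p.+1 n -> 'I_n.+1,
    locating_rainbow_coloring (@corona_adj p.+1 n) c.
Proof.
move=> Hm Hn HE.
have Hp : 2 <= p by [].
have [g0 _] := edge0_ex (ltnW Hm).
pose sig (a : 'I_p.+1) : KEdge p.+1 := insubd g0 (inord (sx a), inord (sy p a)).
have sigE : forall a, (nat_of_ord (e1 (sig a)) = sx a) /\ (nat_of_ord (e2 (sig a)) = sy p a).
  move=> a; have [S1 S2 _ _ _] := sxy_props Hp (ltn_ord a) (ltn_ord a).
  rewrite /sig insubdK /=; first by rewrite !inordK //; lia.
  by rewrite unfold_in /= !inordK //; lia.
have sig_inj : injective sig.
  move=> a b E; apply: val_inj.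
  have [_ _ _ _ H] := sxy_props Hp (ltn_ord a) (ltn_ord b).
  apply: H; have [A1 A2] := sigE a; have [B1 B2] := sigE b.
  by rewrite -A1 -A2 -B1 -B2 E !eqxx.
have sig_nend : forall a, ~~ endpt a (sig a).
  move=> a; have [_ _ N1 N2 _] := sxy_props Hp (ltn_ord a) (ltn_ord a).
  have [A1 A2] := sigE a.
  rewrite /endpt negb_or; apply/andP; split; apply/eqP => /(congr1 val) /=.
    by rewrite A1; apply/eqP.
  by rewrite A2; apply/eqP.
pose rk (g : KEdge p.+1) : nat := enum_rank g.
have rk_lt : forall g, rk g < n.+1.
  by move=> g; apply: leq_trans (ltn_ord (enum_rank g)) HE.
have rk_inj : forall g g', rk g = rk g' -> g = g'.
  by move=> g g' /val_inj /enum_rank_inj.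
pose col (x : corona_vertex p.+1 n) : nat :=
  match x with inl a => rk (sig a) | inr (g, j) => skip (rk g) j end.
have nrk : forall g a, endpt a g -> col (inl a) != rk g.
  move=> g a Ha /=; apply/negP => /eqP /rk_inj E.
  by move: (sig_nend a); rewrite E Ha.
exists (fun x => inord (col x)).
apply: (UB (K := n)) => //.
- case=> [a|[g j]] /=; first exact: rk_lt.
  have := rk_lt g; have := ltn_ord j; rewrite /skip; case: ifP; lia.
- by move=> a b /= /rk_inj /sig_inj.
- by move=> g i j /= /skip_inj /val_inj.
- move=> g g' Ngg; exists (rk g'); split.
  + have Hne : rk g' != rk g by apply: contra Ngg => /eqP /rk_inj ->.
    have Hj : (if rk g' < rk g then rk g' else (rk g').-1) < n.
      have := rk_lt g; have := rk_lt g'; case: ifP; lia.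
    exists (Ordinal Hj); rewrite /= /skip /=; move: Hne; case: ifP; case: ifP; lia.
  + by move=> j; rewrite /= skip_neq.
  + by apply: nrk; rewrite /endpt eqxx.
  + by apply: nrk; rewrite /endpt eqxx orbT.
- move=> g; exists (rk g); split.
  + by move=> j; rewrite /= skip_neq.
  + by apply: nrk; rewrite /endpt eqxx.
  + by apply: nrk; rewrite /endpt eqxx orbT.
  + move=> v; have [h1 [h2 [Hv1 Hv2 N12]]] := incident2 v Hp.
    have [h [Hvh Nh]] : exists h, endpt v h /\ rk h != rk g.
      case: (eqVneq (rk h1) (rk g)) => E1; last by exists h1.
      exists h2; split => //; rewrite -E1; apply: contra N12 => /eqP /rk_inj ->; done.
    have Hj : (if rk g < rk h then rk g else (rk g).-1) < n.
      have := rk_lt g; have := rk_lt h; case: ifP; lia.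
    apply/existsP; exists (inr (h, Ordinal Hj)); apply/andP; split.
      rewrite /=; exact: Hvh.
    rewrite /= /skip /=; move: Nh; case: ifP; case: ifP; lia.
Qed.

Definition cyc m a b := (b == a.+1) || ((a == 0) && (b == m.-1)).
Definition sh m a b := if cyc m a b then 2 else 1.
Definition rot m k x := if x + k < m then x + k else x + k - m.
Definition pp m a b := rot m (sh m a b) a.
Definition qq m a b := rot m (sh m a b) b.

Lemma pq_props m a b : 3 < m -> a < b -> b < m ->
  [/\ pp m a b < m, qq m a b < m, pp m a b != qq m a b,
      (pp m a b != a) && (pp m a b != b) & (qq m a b != a) && (qq m a b != b)].
Proof.
rewrite /pp /qq /sh /rot => H1 H2 H3.
case Hc: (cyc m a b); move: Hc; rewrite /cyc => Hc; repeat case: ifP; move=> *; split; lia.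
Qed.

Lemma pq_inj m a b a' b' : 3 < m -> a < b -> b < m -> a' < b' -> b' < m ->
  (pp m a' b' == pp m a b) || (pp m a' b' == qq m a b) ->
  (qq m a' b' == pp m a b) || (qq m a' b' == qq m a b) -> (a == a') && (b == b').
Proof.
rewrite /pp /qq /sh /rot => H1 H2 H3 H4 H5.
case Hc: (cyc m a b); case Hc': (cyc m a' b'); move: Hc Hc'; rewrite /cyc => Hc Hc'; repeat case: ifP; move=> *; lia.
Qed.

Lemma constr2 p n : 3 < p.+1 -> p.+1 <= n ->
  exists c : corona_vertex p.+1 n -> 'I_n.+2,
    locating_rainbow_coloring (@corona_adj p.+1 n) c.
Proof.
move=> Hm Hmn.
pose P (g : KEdge p.+1) := pp p.+1 (e1 g) (e2 g).
pose Q (g : KEdge p.+1) := qq p.+1 (e1 g) (e2 g).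
have PQ : forall g, [/\ P g < p.+1, Q g < p.+1, P g != Q g,
      (P g != e1 g) && (P g != e2 g) & (Q g != e1 g) && (Q g != e2 g)].
  by move=> g; apply: pq_props => //; apply: e12.
pose col (x : corona_vertex p.+1 n) : nat :=
  match x with inl a => a
  | inr (g, j) => skip (maxn (P g) (Q g)) (skip (minn (P g) (Q g)) j) end.
have notin : forall g j z, (z == P g) || (z == Q g) -> col (inr (g, j)) != z.
  move=> g j z Hz /=; have [_ _ N _ _] := PQ g; move: Hz N; rewrite /skip.
  by do 2 case: ifP; lia.
have isin : forall g z, z < p.+1 -> z != P g -> z != Q g -> exists j, col (inr (g, j)) = z.
  move=> g z Hz N1 N2; have [_ _ N _ _] := PQ g.
  pose lo := minn (P g) (Q g); pose hi := maxn (P g) (Q g).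
  have Hj : (if z < lo then z else if z < hi then z.-1 else z.-2) < n.
    rewrite /lo /hi; move: N1 N2 N Hz Hmn; repeat case: ifP; lia.
  exists (Ordinal Hj); rewrite /= /skip /lo /hi.
  move: N1 N2 N; repeat case: ifP; lia.
exists (fun x => inord (col x)).
have Hm2 : 2 < p.+1 by apply: ltnW.
apply: (UB (K := n.+1)) => //.
- case=> [a|[g j]] /=; first by have := ltn_ord a; lia.
  have := ltn_ord j; rewrite /skip; do 2 case: ifP; lia.
- by move=> a b /= /val_inj.
- by move=> g i j /= /skip_inj /skip_inj /val_inj.
- move=> g g' Ngg.
  have [z [Hz1 Hz2 Hz3]] : exists z, [/\ (z == P g') || (z == Q g'), z != P g & z != Q g].
    case: (boolP ((P g' == P g) || (P g' == Q g))) => H1; last first.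
      by exists (P g'); move: H1; rewrite negb_or eqxx => /andP [-> ->].
    case: (boolP ((Q g' == P g) || (Q g' == Q g))) => H2; last first.
      by exists (Q g'); move: H2; rewrite negb_or eqxx orbT => /andP [-> ->].
    have := pq_inj _ (e12 g) (ltn_ord _) (e12 g') (ltn_ord _) H1 H2.
    move=> /(_ Hm) /andP [/eqP E1 /eqP E2]; move: Ngg; case/negP.
    apply/eqP/val_inj; case: (val g) E1 E2 => [a b]; case: (val g') => [a' b'] /= E1 E2.
    by congr pair; apply: val_inj.
  have [_ _ _ A B] := PQ g'.
  have Hzb : z < p.+1 by have [H1 H2 _ _ _] := PQ g'; move: Hz1; lia.
  have [j Hj] := isin g z Hzb Hz2 Hz3.
  exists z; split; [by exists j | by move=> j'; apply: notin | | ].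
  + by move: Hz1 A B => /=; lia.
  + by move: Hz1 A B => /=; lia.
- move=> g; exists (P g); have [H1 _ _ A _] := PQ g; split.
  + by move=> j; apply: notin; rewrite eqxx.
  + by move: A => /=; lia.
  + by move: A => /=; lia.
  + move=> v; apply/existsP; exists (inl (inord (P g))); apply/andP; split; last first.
      by rewrite /= inordK.
    case: (eqVneq v (inord (P g))) => [->|N]; first by rewrite eqxx.
    by rewrite /= eq_sym N orbT.
Qed.

Lemma sum_lt m j : \sum_(i < m) (i < j) = minn m j.
Proof.
elim: m => [|m IH]; first by rewrite big_ord0 min0n.
rewrite big_ord_recr /= IH; case: (ltnP m j) => H; lia.
Qed.

Lemma cardE2 m : #|{: {p : 'I_m * 'I_m | p.1 < p.2}}| = 'C(m, 2).
Proof.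
rewrite card_sig -sum1_card big_mkcond /=.
rewrite -(pair_bigA _ (fun i j : 'I_m => if (i < j) then 1 else 0)) /=.
rewrite exchange_big /=.
rewrite -bin2_sum big_mkord; apply: eq_bigr => j _.
transitivity (\sum_(i < m) (i < j)); first by apply: eq_bigr => i _; case: (i < j).
by rewrite sum_lt; apply/minn_idPr; apply: ltnW.
Qed.

Lemma m2 m : m * (m - 1) %/ 2 = 'C(m, 2).
Proof. by rewrite bin2 divn2 subn1. Qed.

Theorem theorem9 (m n : nat) :
  3 <= m -> 2 <= n -> m <= n ->
  (m * (m - 1) %/ 2 - 1 <= n -> rvcl_eq (@corona_adj m n) n.+1) /\
  (n < m * (m - 1) %/ 2 - 1 -> rvcl_eq (@corona_adj m n) n.+2).
Proof.
move=> Hm Hn Hmn.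
have HC : m * (m - 1) %/ 2 = #|{: {p : 'I_m * 'I_m | p.1 < p.2}}| by rewrite cardE2 m2.
case: m Hm Hmn HC => [|p] // Hm Hmn HC.
split => HE.
  split; first by apply: constr1 => //; rewrite -HC; lia.
  move=> k' Hk' [c Hc]; apply: (L1 Hm _ Hc); lia.
split.
  apply: constr2 => //.
  case: (ltngtP 3 p.+1) => // H; first by move: Hm H; lia.
  by move: HE Hn; rewrite -H; lia.
move=> k' Hk' [c Hc].
case: (leqP k' n) => Hk; first exact: (L1 Hm Hk Hc).
have E : k' = n.+1 by lia.
subst k'; apply: (L2 Hm Hn _ Hc); rewrite -HC; lia.
Qed.
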